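(* Let $\hat A,\hat B,\hat C,\hat D$ be matrices with entries in $NCFD$ of sizes $k\times m$, $p\times s$, $m\times n$, $s\times r$ respectively. Then $$(\hat A\otimes\hat B)\odot(\hat C\otimes\hat D)=(\hat A\odot\hat C)\otimes(\hat B\odot\hat D).$$
   Context: $NCFD$ is the set of normal convex type-1 fuzzy sets $\mu:[0,1]\to[0,1]$ ($\max_u\mu(u)=1$, and $\mu(u_j)\ge\min\{\mu(u_i),\mu(u_k)\}$ for $u_i\le u_j\le u_k$). Operations: $(\mu_1\sqcup\mu_2)(v)=\sup\{\min(\mu_1(u),\mu_2(w)):\max(u,w)=v\}$, $(\mu_1\sqcap\mu_2)(v)=\sup\{\min(\mu_1(u),\mu_2(w)):\min(u,w)=v\}$. For matrices $R$ ($a\times b$) and $S$ ($b\times c$) with entries in $NCFD$, $R\odot S$ is the $a\times c$ matrix $(R\odot S)(x,z)=\bigsqcup_{y=1}^{b}[R(x,y)\sqcap S(y,z)]$. For $\hat A=[\tilde a_{ij}]$ ($k\times m$) and $\hat B=[\tilde b_{pq}]$ ($p\times s$), the bi-fuzzy tensor $\hat A\otimes\hat B$ is the $kp\times ms$ block matrix whose $(i,j)$ block is $\tilde a_{ij}\sqcap\hat B:=[\tilde a_{ij}\sqcap\tilde b_{pq}]_{p,q}$. *)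

(* Defs.v *)
From mathcomp Require Import all_boot all_order all_algebra.
From mathcomp Require Import boolp classical_sets reals.
Set Implicit Arguments. Unset Strict Implicit. Unset Printing Implicit Defensive.
Import Order.TTheory GRing.Theory Num.Theory.
Local Open Scope ring_scope.
Local Open Scope classical_set_scope.

Section Fuzzy.
Variable R : realType.

(* type-1 fuzzy sets on [0,1]: functions R -> R, only values on [0,1] matter *)
Definition fz := R -> R.

Definition in01 (u : R) := (0 <= u) && (u <= 1).

Definition NCFD (mu : fz) : Prop :=
  (forall u, in01 u -> in01 (mu u)) /\
  (exists u, in01 u /\ mu u = 1 /\ forall u', in01 u' -> mu u' <= 1) /\
  (forall ui uj uk, in01 ui -> in01 uj -> in01 uk -> ui <= uj <= uk ->
     Num.min (mu ui) (mu uk) <= mu uj).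

Definition fjoin (mu1 mu2 : fz) : fz := fun v =>
  sup [set t | exists u w, [/\ in01 u, in01 w, Num.max u w = v &
                                 t = Num.min (mu1 u) (mu2 w)]].

Definition fmeet (mu1 mu2 : fz) : fz := fun v =>
  sup [set t | exists u w, [/\ in01 u, in01 w, Num.min u w = v &
                                 t = Num.min (mu1 u) (mu2 w)]].

Definition fzero : fz := fun v => if v == 0 then 1 else 0.

Definition fmxmul a b c (M : 'M[fz]_(a, b)) (N : 'M[fz]_(b, c)) : 'M[fz]_(a, c) :=
  \matrix_(x, z) \big[fjoin/fzero]_(y < b) fmeet (M x y) (N y z).

(* inverse of mxvec_index: row index i*p + i' |-> (i, i') *)
Definition kidx k p (a : 'I_(k * p)) : 'I_k * 'I_p :=
  enum_val (cast_ord (esym (mxvec_cast k p)) a).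

(* bi-fuzzy tensor: block (i,j) is  a_ij meet B *)
Definition ftens k m p s (A : 'M[fz]_(k, m)) (B : 'M[fz]_(p, s))
  : 'M[fz]_(k * p, m * s) :=
  \matrix_(a, b) fmeet (A (kidx a).1 (kidx b).1) (B (kidx a).2 (kidx b).2).

Definition NCFD_mx a b (M : 'M[fz]_(a, b)) : Prop := forall i j, NCFD (M i j).

End Fuzzy.

(* Main.v *)
Require Import Defs.
From mathcomp Require Import all_boot all_order all_algebra.
From mathcomp Require Import boolp classical_sets reals.
Set Implicit Arguments. Unset Strict Implicit. Unset Printing Implicit Defensive.
Import Order.TTheory GRing.Theory Num.Theory.
Local Open Scope ring_scope.
Local Open Scope classical_set_scope.

Definition bnd {R : realType} (f : fz R) := forall v, in01 v -> 0 <= f v <= 1.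

Lemma sup01 {R : realType} (S : set R) : (forall t, S t -> 0 <= t <= 1) ->
  0 <= sup S <= 1.
Proof.
move=> HS; have [S0|S0] := pselect (S !=set0); last first.
  by rewrite sup_out ?lexx ?ler01 //; case.
have ub : has_ubound S by exists 1 => t /HS /andP[].
case: (S0) => t St.
apply/andP; split.
  by apply: le_trans (ub_le_sup ub St); case/andP: (HS t St).
by apply: ge_sup => // x /HS /andP[].
Qed.

Lemma sup_gtP {R : realType} (S : set R) th : (forall t, S t -> 0 <= t <= 1) ->
  0 <= th -> (th < sup S) <-> (exists t, S t /\ th < t).
Proof.
move=> HS th0; split.
  have [S0|S0] := pselect (S !=set0).
    by move=> /(sup_gt S0) [y Sy lt]; exists y.
  by rewrite sup_out; [rewrite ltNge th0 | case].
case=> t [St lt]; apply: lt_le_trans lt _; apply: ub_le_sup St.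
by exists 1 => y /HS /andP[].
Qed.

Lemma opset01 {R : realType} (op : R -> R -> R) (f g : fz R) v : bnd f -> bnd g ->
  forall t, [set t | exists u w, [/\ in01 u, in01 w, op u w = v &
                                 t = Num.min (f u) (g w)]] t -> 0 <= t <= 1.
Proof.
move=> bf bg t [u [w [u01 w01 _ ->]]].
case/andP: (bf u u01) => f0 f1; case/andP: (bg w w01) => g0 g1.
by rewrite le_min f0 g0 /= ge_min f1.
Qed.

Lemma fop01 {R : realType} (op : R -> R -> R) (f g : fz R) v : bnd f -> bnd g ->
  0 <= sup [set t | exists u w, [/\ in01 u, in01 w, op u w = v &
                                 t = Num.min (f u) (g w)]] <= 1.
Proof. by move=> bf bg; apply: sup01; apply: opset01. Qed.

Lemma fop_lev {R : realType} (op : R -> R -> R) (f g : fz R) v th : bnd f -> bnd g ->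
  0 <= th ->
  (th < sup [set t | exists u w, [/\ in01 u, in01 w, op u w = v &
                                 t = Num.min (f u) (g w)]]) <->
  (exists u w, [/\ in01 u, in01 w, op u w = v, th < f u & th < g w]).
Proof.
move=> bf bg th0; rewrite sup_gtP //; last exact: opset01.
split.
  by case=> t [[u [w [u01 w01 uw ->]]]]; rewrite lt_min => /andP[h1 h2]; exists u, w.
case=> u [w [u01 w01 uw h1 h2]]; exists (Num.min (f u) (g w)); split.
  by exists u, w.
by rewrite lt_min h1 h2.
Qed.

Definition good {R : realType} (f : fz R) := forall v, 0 <= f v <= 1.

Lemma good_bnd {R : realType} (f : fz R) : good f -> bnd f.
Proof. by move=> g v _; apply: g. Qed.

Lemma fmeet_good {R : realType} (f g : fz R) : bnd f -> bnd g -> good (fmeet f g).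
Proof. by move=> bf bg v; apply: fop01. Qed.

Lemma fjoin_good {R : realType} (f g : fz R) : bnd f -> bnd g -> good (fjoin f g).
Proof. by move=> bf bg v; apply: fop01. Qed.

Lemma fzero_good {R : realType} : good (@fzero R).
Proof. by move=> v; rewrite /fzero; case: eqP => _; rewrite ?lexx ?ler01. Qed.

Definition Meet2 {R : realType} (P Q : R -> Prop) (t : R) :=
  exists a c, [/\ in01 a, in01 c, Num.min a c = t, P a & Q c].

Lemma fmeet_lev {R : realType} (f g : fz R) v th : bnd f -> bnd g -> 0 <= th ->
  (th < fmeet f g v) <-> Meet2 (fun a => th < f a) (fun c => th < g c) v.
Proof. by move=> bf bg th0; rewrite /fmeet (fop_lev Num.min). Qed.

Lemma fjoin_lev {R : realType} (f g : fz R) v th : bnd f -> bnd g -> 0 <= th ->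
  (th < fjoin f g v) <->
  (exists u w, [/\ in01 u, in01 w, Num.max u w = v, th < f u & th < g w]).
Proof. by move=> bf bg th0; rewrite /fjoin (fop_lev Num.max). Qed.

Lemma fzero_lev {R : realType} v (th : R) : 0 <= th < 1 ->
  (th < fzero v) <-> v = 0.
Proof.
case/andP=> th0 th1; rewrite /fzero; case: eqP => [->|nv]; split => //.
by rewrite ltNge th0.
Qed.

Lemma in01_min {R : realType} (a b : R) : in01 a -> in01 b -> in01 (Num.min a b).
Proof.
rewrite /in01 => /andP[a0 a1] /andP[b0 b1].
by rewrite le_min a0 b0 ge_min a1.
Qed.

Lemma in01_max {R : realType} (a b : R) : in01 a -> in01 b -> in01 (Num.max a b).
Proof.
rewrite /in01 => /andP[a0 a1] /andP[b0 b1].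
by rewrite le_max a0 ge_max a1 b1.
Qed.

Definition bmax {R : realType} b (u : 'I_b -> R) := \big[Num.max/0]_(y < b) u y.

Lemma bmax01 {R : realType} b (u : 'I_b -> R) : (forall y, in01 (u y)) -> in01 (bmax u).
Proof.
move=> H; rewrite /bmax; apply: (big_ind (fun x : R => in01 x)) => //.
  by rewrite /in01 lexx ler01.
by move=> x y; apply: in01_max.
Qed.

Lemma bmax_ub {R : realType} b (u : 'I_b -> R) y : u y <= bmax u.
Proof.
rewrite /bmax; elim: b u y => [|b IH] u y; first by case: y.
rewrite big_ord_recl; case: (unliftP ord0 y) => [y'|] ->.
  by rewrite le_max (IH (fun i => u (lift ord0 i))) orbT.
by rewrite le_max lexx.
Qed.

Lemma bmax_le {R : realType} b (u : 'I_b -> R) v : (forall y, u y <= v) -> 0 <= v ->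
  bmax u <= v.
Proof.
move=> H v0; rewrite /bmax; apply: (big_ind (fun x => x <= v)) => //.
by move=> x y hx hy; rewrite ge_max hx hy.
Qed.

Lemma bmax_hit {R : realType} b (u : 'I_b -> R) : bmax u = 0 \/ exists y, u y = bmax u.
Proof.
rewrite /bmax; elim: b u => [|b IH] u; first by left; rewrite big_ord0.
rewrite big_ord_recl.
case: (IH (fun i => u (lift ord0 i))) => [->|[y <-]].
  by case: (leP (u ord0) 0) => h; [left | right; exists ord0].
by case: (leP (u ord0) (u (lift ord0 y))) => h; right; [exists (lift ord0 y) | exists ord0].
Qed.

Lemma bmax_char {R : realType} b (u : 'I_b -> R) v : (forall y, in01 (u y)) -> in01 v ->
  bmax u = v <-> ((forall y, u y <= v) /\ (v = 0 \/ exists y, u y = v)).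
Proof.
move=> H v01; split.
  move=> <-; split; first by move=> y; apply: bmax_ub.
  by case: (bmax_hit u) => [->|[y hy]]; [left|right; exists y].
case=> hle hhit; apply/le_anti/andP; split.
  by apply: bmax_le => //; case/andP: v01.
case: hhit => [->|[y <-]]; last exact: bmax_ub.
by case/andP: (bmax01 H).
Qed.

Lemma bigjoin_good {R : realType} b (F : 'I_b -> fz R) : (forall y, bnd (F y)) ->
  good (\big[@fjoin R/@fzero R]_(y < b) F y).
Proof.
elim: b F => [|b IH] F HF; first by rewrite big_ord0; apply: fzero_good.
rewrite big_ord_recl; apply: fjoin_good => //.
by apply: good_bnd; apply: IH => y; apply: HF.
Qed.

Lemma bigjoin_lev {R : realType} b (F : 'I_b -> fz R) th v : (forall y, bnd (F y)) ->
  0 <= th < 1 ->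
  (th < (\big[@fjoin R/@fzero R]_(y < b) F y) v) <->
  (exists u : 'I_b -> R, (forall y, in01 (u y) /\ th < F y (u y)) /\ bmax u = v).
Proof.
move=> HF hth; have th0 : 0 <= th by case/andP: hth.
elim: b F v HF => [|b IH] F v HF.
  rewrite big_ord0 fzero_lev // /bmax; split.
    by move=> ->; exists (fun _ => 0); split; [case | rewrite big_ord0].
  by case=> u [_ <-]; rewrite big_ord0.
rewrite big_ord_recl fjoin_lev //; last first.
  by apply: good_bnd; apply: bigjoin_good => y; apply: HF.
split.
  case=> a [w [a01 w01 aw ha hw]].
  case/(IH (fun i => F (lift ord0 i)) w (fun i => HF _)): hw => u' [Hu' hu'].
  exists (fun y => if unlift ord0 y is Some y' then u' y' else a); split.
    by move=> y; case: (unliftP ord0 y) => [y'|] ->; rewrite ?liftK ?unlift_none //; apply: Hu'.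
  rewrite /bmax big_ord_recl unlift_none -aw -hu' /bmax; congr (Num.max a _).
  by apply: eq_bigr => i _; rewrite liftK.
case=> u [Hu hu].
exists (u ord0), (bmax (fun i => u (lift ord0 i))); split.
- by case: (Hu ord0).
- by apply: bmax01 => i; case: (Hu (lift ord0 i)).
- by rewrite -hu /bmax big_ord_recl.
- by case: (Hu ord0).
apply/(IH (fun i => F (lift ord0 i)) _ (fun i => HF _)).
by exists (fun i => u (lift ord0 i)); split => // i; apply: Hu.
Qed.

Lemma Meet2_iff {R : realType} (P Q P' Q' : R -> Prop) t :
  (forall a, in01 a -> (P a <-> P' a)) -> (forall c, in01 c -> (Q c <-> Q' c)) ->
  Meet2 P Q t <-> Meet2 P' Q' t.
Proof.
move=> HP HQ; split; case=> a [c [a01 c01 ac Pa Qc]]; exists a, c; split => //.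
- by apply/HP.
- by apply/HQ.
- by apply/HP.
- by apply/HQ.
Qed.

Lemma Meet2_swap {R : realType} (PA PB PC PD : R -> Prop) t :
  Meet2 (Meet2 PA PB) (Meet2 PC PD) t <-> Meet2 (Meet2 PA PC) (Meet2 PB PD) t.
Proof.
split; case=> x [y [_ _ xy [a [b [a01 b01 ab Pa Pb]]] [c [d [c01 d01 cd Pc Pd]]]]].
  exists (Num.min a c), (Num.min b d); split; rewrite ?in01_min //.
  - by rewrite -xy -ab -cd minACA.
  - by exists a, c.
  - by exists b, d.
exists (Num.min a c), (Num.min b d); split; rewrite ?in01_min //.
- by rewrite -xy -ab -cd minACA.
- by exists a, c.
- by exists b, d.
Qed.

Definition conv {R : realType} (P : R -> Prop) := forall x y z, in01 x -> in01 y -> in01 z ->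
  x <= y <= z -> P x -> P z -> P y.

Lemma NCFD_conv {R : realType} (f : fz R) th : NCFD f -> conv (fun a => th < f a).
Proof.
case=> _ [_ H] x y z x01 y01 z01 xyz hx hz.
by apply: lt_le_trans (H x y z x01 y01 z01 xyz); rewrite lt_min hx hz.
Qed.

Lemma Meet2_int {R : realType} (P Q : R -> Prop) : conv P -> conv Q ->
  forall x y v, Meet2 P Q x -> Meet2 P Q y -> x <= v <= y -> in01 v -> Meet2 P Q v.
Proof.
move=> cP cQ x y v [a [c [a01 c01 ac Pa Qc]]] [a' [c' [a'01 c'01 ac' Pa' Qc']]].
case/andP=> xv vy v01.
have := le_trans vy (lexx y); rewrite -{1}ac' le_min => /andP[va' vc'].
have Pv : a <= v -> P v by move=> av; apply: (cP a v a') => //; rewrite av va'.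
have Qv : c <= v -> Q v by move=> cv; apply: (cQ c v c') => //; rewrite cv vc'.
case: (leP v a) => va; case: (leP v c) => vc.
- exists a, c; split => //; apply/le_anti; by rewrite ac xv /= -ac le_min va vc.
- exists a, v; split => //; first by rewrite min_r.
  by apply: Qv; rewrite ltW.
- exists v, c; split => //; first by rewrite min_l.
  by apply: Pv; rewrite ltW.
- exists v, v; split => //; first by rewrite minxx.
    by apply: Pv; rewrite ltW.
  by apply: Qv; rewrite ltW.
Qed.

Definition clamp {R : realType} m (S : 'I_m -> R -> Prop) (e : 'I_m -> R) v j :=
  if pselect (S j v) then v else e j.

Lemma clamp_props {R : realType} m (S : 'I_m -> R -> Prop) (e : 'I_m -> R) v :
  (forall j, in01 (e j) /\ S j (e j)) ->
  (forall j x y w, S j x -> S j y -> x <= w <= y -> in01 w -> S j w) -> in01 v ->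
  [/\ forall j, in01 (clamp S e v j) /\ S j (clamp S e v j),
      (forall j a, S j a -> v <= a -> v <= bmax (clamp S e v)) &
      (v < bmax (clamp S e v) -> exists j, forall a, S j a -> v < a)].
Proof.
move=> He Sint v01; have /andP[v0 v1] := v01; split.
- by move=> j; rewrite /clamp; destruct (pselect (S j v)) as [Sv|nS]; [split|apply: He].
- move=> j a Sa va; apply: le_trans (bmax_ub _ j); rewrite /clamp.
  destruct (pselect (S j v)) as [|nS] => //; rewrite leNgt; apply/negP => lt; apply: nS.
  by apply: (Sint j (e j) a v) => //; [apply: (He j).2 | rewrite (ltW lt) va].
- move=> hp; case: (bmax_hit (clamp S e v)) => [E|[j hj]].
    by move: hp; rewrite E ltNge v0.
  exists j => a Sa; move: hp; rewrite -hj /clamp; destruct (pselect (S j v)) as [Sv|nS] => [|lt].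
    by rewrite ltxx.
  rewrite ltNge; apply/negP => av; apply: (nS); rewrite /= in lt.
  by apply: (Sint j a (e j) v) => //; [apply: (He j).2 | rewrite av (ltW lt)].
Qed.

Lemma core {R : realType} m s (S : 'I_m -> R -> Prop) (T : 'I_s -> R -> Prop)
  (kid : 'I_(m * s) -> 'I_m * 'I_s)
  (ksurj : forall j j', exists y, kid y = (j, j'))
  (Sint : forall j x y w, S j x -> S j y -> x <= w <= y -> in01 w -> S j w)
  (Tint : forall j x y w, T j x -> T j y -> x <= w <= y -> in01 w -> T j w)
  (Sne : forall j, exists x, in01 x /\ S j x)
  (Tne : forall j, exists x, in01 x /\ T j x) v :
  (exists u : 'I_(m * s) -> R,
     (forall y, in01 (u y) /\ Meet2 (S (kid y).1) (T (kid y).2) (u y)) /\ bmax u = v) <->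
  Meet2 (fun p => exists sv : 'I_m -> R, (forall j, in01 (sv j) /\ S j (sv j)) /\ bmax sv = p)
        (fun q => exists tv : 'I_s -> R, (forall j, in01 (tv j) /\ T j (tv j)) /\ bmax tv = q) v.
Proof.
split.
  case=> u [Hu hv].
  have v01 : in01 v by rewrite -hv; apply: bmax01 => y; case: (Hu y).
  have /andP[v0 v1] := v01.
  have [st Hst] := choice (fun y => (Hu y).2).
  have [e He] := choice Sne.
  have [f Hf] := choice Tne.
  have [Sc1 Sc2 Sc3] := clamp_props He Sint v01.
  have [Tc1 Tc2 Tc3] := clamp_props Hf Tint v01.
  have Sc01 : forall j, in01 (clamp S e v j) by move=> j; case: (Sc1 j).
  have Tc01 : forall j, in01 (clamp T f v j) by move=> j; case: (Tc1 j).
  exists (bmax (clamp S e v)), (bmax (clamp T f v)); split.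
  - exact: bmax01.
  - exact: bmax01.
  - apply/le_anti/andP; split.
      rewrite leNgt lt_min; apply/negP => /andP[/Sc3 [j Hj] /Tc3 [j' Hj']].
      have [y ky] := ksurj j j'.
      have := bmax_ub u y; rewrite hv.
      have [c] := Hst y; rewrite ky /= => -[_ _ <- Sa Tc].
      by rewrite leNgt lt_min Hj // Hj'.
    case: (bmax_hit u) => [E|[y0 hy0]].
      have vz : v = 0 by rewrite -hv E.
      rewrite [X in X <= _]vz le_min.
      by have /andP[-> _] := bmax01 Sc01; have /andP[-> _] := bmax01 Tc01.
    have [c [_ _ ac Sa Tc]] := Hst y0.
    have : v <= Num.min (st y0) c by rewrite ac hy0 hv.
    rewrite le_min => /andP[va vc]; rewrite le_min.
    by rewrite (Sc2 _ _ Sa va) (Tc2 _ c Tc vc).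
  - by exists (clamp S e v); split.
  - by exists (clamp T f v); split.
case=> p [q [p01 q01 pq [sv [Hsv hp]] [tv [Htv hq]]]].
exists (fun y => Num.min (sv (kid y).1) (tv (kid y).2)); split.
  move=> y; split; first by apply: in01_min; [case: (Hsv (kid y).1) | case: (Htv (kid y).2)].
  exists (sv (kid y).1), (tv (kid y).2); split => //.
  - by case: (Hsv (kid y).1).
  - by case: (Htv (kid y).2).
  - by case: (Hsv (kid y).1).
  - by case: (Htv (kid y).2).
have v01 : in01 v by rewrite -pq in01_min.
apply/bmax_char => //.
  move=> y; apply: in01_min; [case: (Hsv (kid y).1) | case: (Htv (kid y).2)] => //.
split.
  move=> y; rewrite -pq le_min -hp -hq !ge_min !bmax_ub ?orbT //.
case: (bmax_hit sv) => [E|[j hj]].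
  left; rewrite -pq -hp E; apply: min_l; by case/andP: q01.
case: (bmax_hit tv) => [E|[j' hj']].
  left; rewrite -pq -hq E; apply: min_r; by case/andP: p01.
right; have [y ky] := ksurj j j'; exists y.
by rewrite ky /= hj hj' hp hq.
Qed.

Lemma NCFD_bnd {R : realType} (f : fz R) : NCFD f -> bnd f.
Proof. by case. Qed.

Lemma NCFD_ne {R : realType} (f : fz R) th : NCFD f -> th < 1 -> exists a, in01 a /\ th < f a.
Proof. by case=> _ [[a [a01 [fa _]]] _] th1; exists a; rewrite fa. Qed.

Lemma eq_lev {R : realType} (a b : R) : 0 <= a <= 1 -> 0 <= b <= 1 ->
  (forall th, 0 <= th < 1 -> (th < a <-> th < b)) -> a = b.
Proof.
move=> /andP[a0 a1] /andP[b0 b1] H; apply/le_anti/andP; split.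
  rewrite leNgt; apply/negP => lt.
  have hb : 0 <= b < 1 by rewrite b0 (lt_le_trans lt a1).
  by case: (H b hb) => h1 _; move: (h1 lt); rewrite ltxx.
rewrite leNgt; apply/negP => lt.
have ha : 0 <= a < 1 by rewrite a0 (lt_le_trans lt b1).
by case: (H a ha) => _ h1; move: (h1 lt); rewrite ltxx.
Qed.

Lemma ex_iff {R : realType} n (P Q : 'I_n -> R -> Prop) (X : ('I_n -> R) -> Prop) :
  (forall y t, in01 t -> (P y t <-> Q y t)) ->
  (exists u, (forall y, in01 (u y) /\ P y (u y)) /\ X u) <->
  (exists u, (forall y, in01 (u y) /\ Q y (u y)) /\ X u).
Proof.
move=> H; split; case=> u [Hu Xu]; exists u; split => // y; case: (Hu y) => u01 h;
  split => //; by apply/(H y (u y) u01).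
Qed.

Lemma kidx_surj k p (j : 'I_k) (j' : 'I_p) : exists y, kidx y = (j, j').
Proof.
exists (cast_ord (mxvec_cast k p) (enum_rank (j, j'))).
by rewrite /kidx cast_ordK enum_rankK.
Qed.

Theorem lemma1 (R : realType) (k m p s n r : nat)
  (A : 'M[fz R]_(k, m)) (B : 'M[fz R]_(p, s))
  (C : 'M[fz R]_(m, n)) (D : 'M[fz R]_(s, r)) :
  NCFD_mx A -> NCFD_mx B -> NCFD_mx C -> NCFD_mx D ->
  fmxmul (ftens A B) (ftens C D) = ftens (fmxmul A C) (fmxmul B D).
Proof.
move=> nA nB nC nD; apply/matrixP => x z; rewrite /fmxmul /ftens !mxE.
apply: funext => v.
under eq_bigr => y _ do rewrite !mxE.
set i := (kidx x).1; set i' := (kidx x).2; set zz := (kidx z).1; set zz' := (kidx z).2.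
have bA : forall a b, bnd (A a b) by move=> a b; apply: NCFD_bnd.
have bB : forall a b, bnd (B a b) by move=> a b; apply: NCFD_bnd.
have bC : forall a b, bnd (C a b) by move=> a b; apply: NCFD_bnd.
have bD : forall a b, bnd (D a b) by move=> a b; apply: NCFD_bnd.
have bF : forall y : 'I_(m * s), bnd (fmeet (fmeet (A i (kidx y).1) (B i' (kidx y).2))
                         (fmeet (C (kidx y).1 zz) (D (kidx y).2 zz'))).
  by move=> y; apply: good_bnd; apply: fmeet_good; apply: good_bnd; apply: fmeet_good.
have bAC : forall j, bnd (fmeet (A i j) (C j zz)).
  by move=> j; apply: good_bnd; apply: fmeet_good.
have bBD : forall j, bnd (fmeet (B i' j) (D j zz')).
  by move=> j; apply: good_bnd; apply: fmeet_good.
have bJ1 := bigjoin_good bAC; have bJ2 := bigjoin_good bBD.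
apply: eq_lev.
- exact: bigjoin_good.
- by apply: fmeet_good; apply: good_bnd.
move=> th hth; have th0 : 0 <= th by case/andP: hth.
rewrite bigjoin_lev // fmeet_lev //; try (by apply: good_bnd).
pose S j := Meet2 (fun a => th < A i j a) (fun c => th < C j zz c).
pose T j := Meet2 (fun b => th < B i' j b) (fun d => th < D j zz' d).
apply: (iff_trans (@ex_iff R _
   (fun y t => th < fmeet (fmeet (A i (kidx y).1) (B i' (kidx y).2))
                         (fmeet (C (kidx y).1 zz) (D (kidx y).2 zz')) t)
   (fun y t => Meet2 (S (kidx y).1) (T (kidx y).2) t) (fun u => bmax u = v) _)).
  move=> y t t01; rewrite fmeet_lev //; try (by apply: good_bnd; apply: fmeet_good).
  rewrite /S /T -Meet2_swap.
  by apply: Meet2_iff => a a01; apply: fmeet_lev.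
rewrite (core (S := S) (T := T) (kid := @kidx m s)).
- apply: Meet2_iff => [a a01|a a01]; rewrite bigjoin_lev //.
    apply: (@ex_iff R _ S (fun j t => th < fmeet (A i j) (C j zz) t) (fun u => bmax u = a)).
    by move=> j t t01; rewrite fmeet_lev.
  apply: (@ex_iff R _ T (fun j t => th < fmeet (B i' j) (D j zz') t) (fun u => bmax u = a)).
  by move=> j t t01; rewrite fmeet_lev.
- exact: kidx_surj.
- by move=> j; apply: Meet2_int; apply: NCFD_conv.
- by move=> j; apply: Meet2_int; apply: NCFD_conv.
- move=> j; have [a [a01 ha]] := NCFD_ne (nA i j) (proj2 (andP hth)).
  have [c [c01 hc]] := NCFD_ne (nC j zz) (proj2 (andP hth)).
  by exists (Num.min a c); split; [apply: in01_min | exists a, c].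
- move=> j; have [a [a01 ha]] := NCFD_ne (nB i' j) (proj2 (andP hth)).
  have [c [c01 hc]] := NCFD_ne (nD j zz') (proj2 (andP hth)).
  by exists (Num.min a c); split; [apply: in01_min | exists a, c].
Qed.
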